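(* Fix constants $\mu_1,\ldots,\mu_M\ge 0$ and $P_1^{\rm ST},\ldots,P_K^{\rm ST}>0$. For a channel realization $\boldsymbol{\alpha}$ consider the problem $$\max_{p_1,\ldots,p_K}\ \log\Big(1+\sum_{k=1}^K h_kp_k\Big)-\sum_{m=1}^M\mu_m\sum_{k=1}^K g_{km}p_k\quad\text{s.t.}\quad 0\le p_k\le P_k^{\rm ST}\ \ \forall k.$$ For almost every realization $\boldsymbol{\alpha}$: if $(p_1^*,\ldots,p_K^* )$ is an optimal solution and $i,j$ are users with $p_i^*>0$ and $p_j^*=0$, then $$\frac{h_i}{\sum_{m=1}^M\mu_m g_{im}}\ \ge\ \frac{h_j}{\sum_{m=1}^M\mu_m g_{jm}}.$$
   Context: $\boldsymbol{\alpha}=(h_1,\ldots,h_K,g_{11},\ldots,g_{KM})$ is a random vector of nonnegative channel power gains ($h_k$: secondary user $k$ to secondary base station; $g_{km}$: secondary user $k$ to primary receiver $m$) with a continuous, differentiable joint cumulative distribution function, the $h_k$'s and $g_{km}$'s being independent. Convention: $x/0=+\infty$ for $x>0$. *)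

(* Defs.v *)
From HB Require Import structures.
From mathcomp Require Import all_boot all_order all_algebra.
From mathcomp Require Import all_classical all_reals all_analysis.
Set Implicit Arguments. Unset Strict Implicit. Unset Printing Implicit Defensive.
Import Order.TTheory GRing.Theory Num.Theory.
Import numFieldNormedType.Exports.
Local Open Scope classical_set_scope.
Local Open Scope ring_scope.

(* Mutual independence of a finite family of real random variables:
   product rule for every choice of Borel sets (sub-families via B i = setT). *)
Definition mutually_independent (R : realType) (d : measure_display)
  (T : measurableType d) (P : probability T R) (I : finType) (X : I -> T -> R) :=
  forall B : I -> set R, (forall i, measurable (B i)) ->
    P (\bigcap_(i in [set: I]) (X i @^-1` B i)) = (\prod_(i : I) P (X i @^-1` B i))%E.

Definition joint_cdf (R : realType) (d : measure_display) (T : measurableType d)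
  (P : probability T R) (N : nat) (X : 'I_N -> T -> R) (x : 'rV[R]_N) : R :=
  fine (P [set w | forall i : 'I_N, X i w <= x ord0 i]).

Definition chan_h (R : Type) (T : Type) (K M : nat)
  (alpha : 'I_(K + K * M) -> T -> R) (k : 'I_K) : T -> R :=
  alpha (lshift (K * M) k).
Definition chan_g (R : Type) (T : Type) (K M : nat)
  (alpha : 'I_(K + K * M) -> T -> R) (k : 'I_K) (m : 'I_M) : T -> R :=
  alpha (rshift K (mxvec_index k m)).

Definition objective (R : realType) (K M : nat) (h : 'I_K -> R)
  (g : 'I_K -> 'I_M -> R) (mu : 'I_M -> R) (p : 'I_K -> R) : R :=
  ln (1 + \sum_(k < K) h k * p k) - \sum_(m < M) mu m * \sum_(k < K) g k m * p k.

Definition feasible (R : realType) (K : nat) (PST : 'I_K -> R) (p : 'I_K -> R) :=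
  forall k, 0 <= p k <= PST k.

Definition is_optimal (R : realType) (K M : nat) (h : 'I_K -> R)
  (g : 'I_K -> 'I_M -> R) (mu : 'I_M -> R) (PST : 'I_K -> R) (p : 'I_K -> R) :=
  feasible PST p /\
  forall q, feasible PST q -> objective h g mu q <= objective h g mu p.

Definition eratio (R : realType) (x y : R) : \bar R :=
  if y == 0 then +oo%E else (x / y)%:E.

(* Main.v *)
Require Import Defs.
From mathcomp Require Import lra.
From HB Require Import structures.
From mathcomp Require Import all_boot all_order all_algebra.
From mathcomp Require Import all_classical all_reals all_analysis.
Import Order.TTheory GRing.Theory Num.Theory.
Import numFieldNormedType.Exports.
Local Open Scope classical_set_scope.
Local Open Scope ring_scope.



Lemma cont_zero (R : realType) (N : nat) (f : 'rV[R]_N -> R) (x D : 'rV[R]_N) :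
  continuous f -> (forall e : R, 0 < e -> f (x - e *: D) = 0) -> f x = 0.
Proof.
move=> fc f0.
have cg : (fun e : R => x - e *: D) @ (0:R) --> x.
  rewrite -[X in _ --> X](subr0 x) -[X in _ --> x - X](scale0r D).
  apply: cvgB; first exact: cvg_cst.
  apply: cvgZ; [exact: cvg_id| exact: cvg_cst].
have cG := cvg_comp _ _ cg (fc x).
apply/normr0_eq0/eqP; rewrite eq_le normr_ge0 andbT leNgt; apply/negP => eps0.
set eps := `|f x| in eps0.
move/cvgrPdist_lt: cG => /(_ eps eps0) H.
have : \forall e \near (0:R)^'+, 0 < e /\ `|f x - f (x - e *: D)| < eps.
  apply/near_andP; split; first exact: nbhs_right_gt.
  by apply: filterS H => y Hy _.
move=> /filter_ex [e [e0 He]].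
by move: He; rewrite f0 // subr0 ltxx.
Qed.

Lemma null_coord (R : realType) d (T : measurableType d) (P : probability T R)
  N (X : 'I_N -> T -> R) (a : 'I_N) :
  (forall i, measurable_fun setT (X i)) -> (forall i w, 0 <= X i w) ->
  continuous (joint_cdf P X) -> \forall w \ae P, 0 < X a w.
Proof.
move=> mX X0 hc.
pose x (n : nat) : 'rV[R]_N := \row_b0 (if b0 == a then 0 else n%:R).
pose S n := [set w | forall b, X b w <= x n ord0 b].
have mS n : measurable (S n).
  have -> : S n = \bigcap_(b in [set: 'I_N]) (X b @^-1` `]-oo, x n ord0 b]).
    apply/seteqP; split => w /=.
      by move=> H b _ /=; rewrite in_itv /= H.
    by move=> H b; have := H b I; rewrite /= in_itv.
  apply: fin_bigcap_measurable; first exact: finite_finset.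
  move=> b _; rewrite -(setTI (X b @^-1` _)); apply: mX => //; exact: measurable_itv.
have PS n : P (S n) = 0%E.
  have H := @cont_zero R N (joint_cdf P X) (x n) (delta_mx 0 a) hc.
  have {H} : fine (P (S n)) = 0.
    apply: H => e e0; rewrite /joint_cdf.
    rewrite (_ : [set w | _] = set0) ?measure0 //.
    apply/seteqP; split => w //= /(_ a).
    rewrite !mxE !eqxx /= mulr1 sub0r => Hw.
    have := X0 a w; rewrite leNgt => /negP; apply.
    by apply: (le_lt_trans Hw); rewrite oppr_lt0.
  have h0 := measure_ge0 P (S n).
  have h1 := probability_le1 P (mS n).
  move=> H0; rewrite -[P (S n)]fineK ?ge0_fin_numE ?(le_lt_trans h1) ?ltry // H0 //=.
rewrite /prop_near1 /nbhs /=.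
apply: (@negligibleS _ _ _ _ (\bigcup_n S n)).
  move=> w /= /negP; rewrite -leNgt => Xa.
  exists (Num.Def.trunc (\sum_b X b w)).+1 => // b.
  rewrite mxE; case: eqP => [->//|_].
  apply: ltW; apply: le_lt_trans (truncnS_gt _).
  by rewrite (bigD1 b) //= lerDl sumr_ge0.
by apply: negligible_bigcup => n; apply/negligibleP; [exact: mS| exact: PS].
Qed.

Lemma sum_ind (R : realType) K (f : 'I_K -> R) (i : 'I_K) :
  \sum_(k < K) f k * (k == i)%:R = f i.
Proof.
rewrite (bigD1 i) //= eqxx mulr1 big1 ?addr0 // => k /negbTE ->.
by rewrite mulr0.
Qed.

Lemma sum_lin (R : realType) K (a p : 'I_K -> R) (i j : 'I_K) (dl dl' : R) :
  \sum_(k < K) a k * (p k - (k == i)%:R * dl + (k == j)%:R * dl') =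
  \sum_(k < K) a k * p k - a i * dl + a j * dl'.
Proof.
under eq_bigr => k _ do
  rewrite mulrDr mulrBr (mulrA (a k) (k == i)%:R) (mulrA (a k) (k == j)%:R).
by rewrite big_split /= sumrB -!mulr_suml !sum_ind.
Qed.

Lemma cost_lin (R : realType) K M (g : 'I_K -> 'I_M -> R) (mu : 'I_M -> R)
  (p : 'I_K -> R) (i j : 'I_K) (dl dl' : R) :
  \sum_(m < M) mu m * \sum_(k < K) g k m * (p k - (k == i)%:R * dl + (k == j)%:R * dl') =
  \sum_(m < M) mu m * \sum_(k < K) g k m * p k - (\sum_(m < M) mu m * g i m) * dl
  + (\sum_(m < M) mu m * g j m) * dl'.
Proof.
under eq_bigr => m _ do rewrite (@sum_lin _ _ (fun k => g k m)) mulrDr mulrBr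
  (mulrA (mu m) (g i m)) (mulrA (mu m) (g j m)).
by rewrite big_split /= sumrB -!mulr_suml.
Qed.

Lemma pointwise (R : realType) K M (h : 'I_K -> R) (g : 'I_K -> 'I_M -> R)
  (mu : 'I_M -> R) (PST : 'I_K -> R) (p : 'I_K -> R) (i j : 'I_K) :
  (forall k, 0 < h k) -> (forall k m, 0 <= g k m) -> (forall m, 0 <= mu m) ->
  (forall k, 0 < PST k) -> is_optimal h g mu PST p -> 0 < p i -> p j = 0 ->
  (eratio (h j) (\sum_(m < M) mu m * g j m)
     <= eratio (h i) (\sum_(m < M) mu m * g i m))%E.
Proof.
move=> h0 g0 mu0 PST0 [fp opt] pi pj.
set ci := \sum_(m < M) mu m * g i m.
set cj := \sum_(m < M) mu m * g j m.
have ci0 : 0 <= ci by apply: sumr_ge0 => m _; rewrite mulr_ge0.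
have cj0 : 0 <= cj by apply: sumr_ge0 => m _; rewrite mulr_ge0.
have ij : i != j by apply/eqP => eij; move: pi; rewrite eij pj ltxx.
have hi0 := h0 i; have hj0 := h0 j.
have key : ci * h j <= h i * cj.
  pose dl := Num.min (p i) (h j * PST j / (h i + 1)).
  have dl0 : 0 < dl.
    by rewrite lt_min pi /= divr_gt0 ?mulr_gt0 ?addr_gt0.
  pose dl' := dl * h i / h j.
  pose q k := p k - (k == i)%:R * dl + (k == j)%:R * dl'.
  have fq : feasible PST q.
    move=> k; rewrite /q.
    have [->|ki] := eqVneq k i.
      rewrite (negbTE ij) /= mul1r mul0r addr0.
      have := fp i => /andP[_ pP].
      have dlp : dl <= p i by rewrite ge_min lexx.
      apply/andP; split; first by rewrite subr_ge0.
      by apply: le_trans pP; rewrite lerBlDr lerDl ltW.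
    have [->|kj] := eqVneq k j.
      rewrite /= mul0r subr0 mul1r pj add0r.
      apply/andP; split; first by rewrite /dl' divr_ge0 ?mulr_ge0 ?ltW.
      have dle : dl <= h j * PST j / (h i + 1) by rewrite ge_min lexx orbT.
      rewrite /dl' ler_pdivrMr // mulrC.
      apply: (le_trans (ler_wpM2l (ltW hi0) dle)).
      rewrite mulrA ler_pdivrMr ?addr_gt0 //.
      have := PST0 j; nra.
    by rewrite /= !mul0r subr0 addr0; exact: fp.
  have := opt q fq.
  rewrite /objective /q sum_lin.
  rewrite cost_lin -/ci -/cj.
  have -> : h i * dl = h j * dl' by rewrite /dl' mulrCA mulfV ?gt_eqF // mulr1 mulrC.
  rewrite subrK => H.
  have H2 : ci * dl <= cj * dl'.
    move: H; set L := ln _; set C := \sum_(m < M) _. 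
    by rewrite mulrC (mulrC cj) => H; lra.
  move: H2; rewrite /dl' mulrA => H2.
  have H3 : ci * dl * h j <= cj * dl * h i.
    by move: H2; rewrite ler_pdivlMr // mulrA.
  move: H3; rewrite mulrAC (mulrAC cj) ler_pM2r // mulrC.
  by rewrite (mulrC cj).
rewrite /eratio.
have [ci_0|ci_n0] := eqVneq ci 0; first by rewrite leey.
have cip : 0 < ci by rewrite lt_def ci_n0 ci0.
have [cj_0|cj_n0] := eqVneq cj 0.
  by move: key; rewrite cj_0 mulr0 leNgt mulr_gt0.
have cjp : 0 < cj by rewrite lt_def cj_n0 cj0.
rewrite lee_fin ler_pdivlMr // mulrAC ler_pdivrMr //.
by rewrite mulrC.
Qed.

Theorem lemma3p4 (R : realType) (d : measure_display) (T : measurableType d)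
  (P : probability T R) (K M : nat) (alpha : 'I_(K + K * M) -> T -> R)
  (mu : 'I_M -> R) (PST : 'I_K -> R) :
  (forall i, measurable_fun setT (alpha i)) ->
  (forall i w, 0 <= alpha i w) ->
  mutually_independent P alpha ->
  continuous (joint_cdf P alpha) ->
  (forall x, differentiable (joint_cdf P alpha) x) ->
  (forall m, 0 <= mu m) ->
  (forall k, 0 < PST k) ->
  {ae P, forall w,
    forall p : 'I_K -> R,
      is_optimal (fun k => chan_h alpha k w) (fun k m => chan_g alpha k m w) mu PST p ->
      forall i j : 'I_K, 0 < p i -> p j = 0 ->
        (eratio (chan_h alpha j w) (\sum_(m < M) mu m * chan_g alpha j m w)
         <= eratio (chan_h alpha i w) (\sum_(m < M) mu m * chan_g alpha i m w))%E}.
Proof.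
move=> mA A0 _ hc _ mu0 PST0.
have H := @filter_forall T _ (fun a w => 0 < alpha a w) (almost_everywhere P) (ae_filter_ringOfSetsType P)
  (fun a => @null_coord R d T P _ alpha a mA A0 hc).
rewrite /prop_near1 /nbhs /= in H *.
apply: (negligibleS _ H) => w /= nQ Hw; apply: nQ => p opt i j pi pj.
apply: (@pointwise R K M (fun k => chan_h alpha k w) (fun k m => chan_g alpha k m w) mu PST p i j) => //.
- by move=> k; exact: Hw.
- by move=> k m; exact: A0.
Qed.
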